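(* Let $g_n$ ($n\ge0$) denote the parity of the number of digits equal to $1$ in the negabinary representation of $n$. Then the infinite word $g_0g_1g_2\cdots$ is cube-free: there is no nonempty finite word $X$ over $\{0,1\}$ such that $XXX$ occurs as a block of consecutive terms $g_a g_{a+1}\cdots g_{a+3|X|-1}$ for some $a\ge0$.
   Context: Every nonnegative integer $n$ has a unique representation $n=\sum_{i\ge0} d_i(-2)^i$ with digits $d_i\in\{0,1\}$, only finitely many nonzero; this is the negabinary (base $-2$) representation. Parity means the number modulo $2$. *)

(* Defs.v *)
From Stdlib Require Import ZArith List Lia.
Import ListNotations.
Open Scope Z_scope.

Fixpoint negabin_eval (ds : list Z) : Z :=
  match ds with
  | [] => 0
  | d :: ds' => d + (-2) * negabin_eval ds'
  end.

(* Fuel bounds the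
   recursion; fuel |z|+1 always suffices (|(z-d)/(-2)| < |z| for z <> 0,
   |.| <= 1 case terminates in <= 2 steps). *)
Fixpoint negabin_digits_aux (fuel : nat) (z : Z) : list Z :=
  match fuel with
  | O => []
  | S f =>
      if Z.eqb z 0 then []
      else let d := Z.modulo z 2 in d :: negabin_digits_aux f ((z - d) / (-2))
  end.

Definition negabin_digits (n : nat) : list Z :=
  negabin_digits_aux (S (S n)) (Z.of_nat n).

Definition g (n : nat) : nat :=
  Nat.modulo (length (filter (fun d => Z.eqb d 1) (negabin_digits n))) 2.

(* Main.v *)
Require Import Defs.
From Stdlib Require Import ZArith List Lia.

Import ListNotations.
Open Scope Z_scope.

Definition B (z : Z) : Z :=
  if Z.eqb z 0 then 0 else if Z.eqb z 1 then 1 else if Z.eqb z (-1) then 2 else Z.abs z + 1.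

Lemma B_nonneg z : 0 <= B z.
Proof. unfold B; destruct (Z.eqb_spec z 0); destruct (Z.eqb_spec z 1); destruct (Z.eqb_spec z (-1)); lia. Qed.

Lemma B_pos z : z <> 0 -> 1 <= B z.
Proof. unfold B; destruct (Z.eqb_spec z 0); destruct (Z.eqb_spec z 1); destruct (Z.eqb_spec z (-1)); lia. Qed.

Lemma stepB z : z <> 0 -> B ((z - z mod 2)/(-2)) + 1 <= B z.
Proof.
  intros Hz. unfold B.
  assert (Hd : 0 <= z mod 2 < 2 /\ z = z mod 2 - 2 * ((z - z mod 2)/(-2))).
  { Z.div_mod_to_equations. lia. }
  generalize dependent ((z - z mod 2)/(-2)). generalize dependent (z mod 2).
  intros d z' Hd.
  destruct (Z.eqb_spec z 0); [lia|].
  destruct (Z.eqb_spec z' 0);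
  destruct (Z.eqb_spec z' 1);
  destruct (Z.eqb_spec z' (-1));
  destruct (Z.eqb_spec z 1);
  destruct (Z.eqb_spec z (-1)); lia.
Qed.

Lemma stab1 : forall f z, B z <= Z.of_nat f ->
  negabin_digits_aux f z = negabin_digits_aux (S f) z.
Proof.
  induction f; intros z H.
  - assert (z = 0). { destruct (Z.eq_dec z 0); auto. pose proof (B_pos z n). lia. }
    subst. reflexivity.
  - change (negabin_digits_aux (S (S f)) z) with
      (if Z.eqb z 0 then [] else let d := Z.modulo z 2 in d :: negabin_digits_aux (S f) ((z - d) / (-2))).
    simpl. destruct (Z.eqb_spec z 0); auto.
    f_equal. apply IHf. pose proof (stepB z n). lia.
Qed.

Lemma stab : forall k f z, B z <= Z.of_nat f ->
  negabin_digits_aux f z = negabin_digits_aux (k + f) z.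
Proof.
  induction k; intros f z H; simpl; auto.
  rewrite IHk by auto. apply stab1. lia.
Qed.

Definition cnt (l : list Z) : nat := length (filter (fun d => Z.eqb d 1) l).

Definition GZ (z : Z) : nat := Nat.modulo (cnt (negabin_digits_aux (Z.to_nat (B z)) z)) 2.

Lemma GZ_fuel z f : B z <= Z.of_nat f -> GZ z = Nat.modulo (cnt (negabin_digits_aux f z)) 2.
Proof.
  intros H. unfold GZ.
  pose proof (B_nonneg z).
  replace f with ((f - Z.to_nat (B z)) + Z.to_nat (B z))%nat by lia.
  rewrite <- stab; auto. lia.
Qed.

Lemma g_GZ n : g n = GZ (Z.of_nat n).
Proof.
  unfold g, negabin_digits. rewrite (GZ_fuel _ (S (S n))); auto.
  unfold B; destruct (Z.eqb_spec (Z.of_nat n) 0); destruct (Z.eqb_spec (Z.of_nat n) 1); destruct (Z.eqb_spec (Z.of_nat n) (-1)); lia.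
Qed.

Lemma GZ_lt z : (GZ z < 2)%nat.
Proof. unfold GZ. apply Nat.mod_upper_bound. lia. Qed.

Lemma aux_even f k : 2*k <> 0 ->
  negabin_digits_aux (S f) (2*k) = 0 :: negabin_digits_aux f (-k).
Proof.
  intros H. cbn [negabin_digits_aux]. destruct (Z.eqb_spec (2*k) 0); [lia|].
  assert (E1 : (2*k) mod 2 = 0) by (Z.div_mod_to_equations; lia). rewrite E1.
  assert (E2 : (2*k - 0)/(-2) = -k) by (Z.div_mod_to_equations; lia). rewrite E2. reflexivity.
Qed.

Lemma aux_odd f k :
  negabin_digits_aux (S f) (2*k+1) = 1 :: negabin_digits_aux f (-k).
Proof.
  cbn [negabin_digits_aux]. destruct (Z.eqb_spec (2*k+1) 0); [lia|].
  assert (E1 : (2*k+1) mod 2 = 1) by (Z.div_mod_to_equations; lia). rewrite E1.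
  assert (E2 : (2*k+1 - 1)/(-2) = -k) by (Z.div_mod_to_equations; lia). rewrite E2. reflexivity.
Qed.

Lemma P1 k : GZ (2*k) = GZ (-k).
Proof.
  destruct (Z.eq_dec k 0). { subst. reflexivity. }
  pose proof (B_nonneg (2*k)). pose proof (B_nonneg (-k)).
  set (f := Z.to_nat (B (2*k) + B (-k))).
  rewrite (GZ_fuel (2*k) (S f)) by lia.
  rewrite (GZ_fuel (-k) f) by lia.
  rewrite aux_even by lia. reflexivity.
Qed.

Lemma P2 k : GZ (2*k+1) <> GZ (2*k).
Proof.
  rewrite P1.
  pose proof (B_nonneg (2*k+1)). pose proof (B_nonneg (-k)).
  set (f := Z.to_nat (B (2*k+1) + B (-k))).
  rewrite (GZ_fuel (2*k+1) (S f)) by lia.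
  rewrite (GZ_fuel (-k) f) by lia.
  rewrite aux_odd. unfold cnt. simpl filter. simpl length.
  set (c := length _). intro Hc.
  pose proof (Nat.div_mod_eq (S c) 2). pose proof (Nat.div_mod_eq c 2).
  pose proof (Nat.mod_upper_bound (S c) 2 ltac:(lia)).
  pose proof (Nat.mod_upper_bound c 2 ltac:(lia)). lia.
Qed.

Lemma even_or_odd z : exists k, z = 2*k \/ z = 2*k+1.
Proof. exists (z/2). Z.div_mod_to_equations. lia. Qed.

Lemma no3 z : ~ (GZ z = GZ (z+1) /\ GZ (z+1) = GZ (z+2)).
Proof.
  intros [H1 H2].
  destruct (even_or_odd z) as [k [-> | ->]].
  - apply (P2 k). congruence.
  - apply (P2 (k+1)). replace (2*(k+1)+1) with (2*k+1+2) by lia.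
    replace (2*(k+1)) with (2*k+1+1) by lia. congruence.
Qed.

Definition Win (a : Z) (m : Z) : Prop :=
  forall j, a <= j < a + 2*m -> GZ j = GZ (j + m).

Lemma main : forall n : nat, forall a m, m = Z.of_nat n -> 0 < m -> ~ Win a m.
Proof.
  intro n. induction n as [n IH] using (well_founded_induction lt_wf).
  intros a m Hm Hpos W.
  destruct (even_or_odd m) as [t [Ht|Ht]].
  -
    assert (W2 : exists b, Win (2*b) m).
    { destruct (even_or_odd a) as [b [Ha|Ha]].
      - exists b. subst a. exact W.
      - exists b. intros j Hj.
        destruct (Z.eq_dec j (2*b)).
        + subst j.
          pose proof (P2 b). pose proof (P2 (b+t)).
          pose proof (W (2*b+1) ltac:(lia)).
          replace (2*(b+t)+1) with (2*b+1+m) in H0 by lia.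
          replace (2*(b+t)) with (2*b+m) in H0 by lia.
          pose proof (GZ_lt (2*b)). pose proof (GZ_lt (2*b+1)).
          pose proof (GZ_lt (2*b+m)). pose proof (GZ_lt (2*b+1+m)). lia.
        + apply W. lia. }
    destruct W2 as [b Wb].
    apply (IH (Z.to_nat t) ltac:(lia) (-b-3*t+1) t ltac:(lia) ltac:(lia)).
    intros j Hj.
    set (k := -(j+t)).
    replace (j + t) with (-k) by lia.
    replace j with (-(k+t)) by lia.
    rewrite <- !P1.
    replace (2*(k+t)) with (2*k+m) by lia.
    symmetry. apply Wb. lia.
  -
    destruct (Z.eq_dec t 0).
    + subst t. simpl in Ht. rewrite Ht in W.
      apply (no3 a). split.
      * apply W. lia.
      * replace (a+2) with (a+1+1) by lia. apply W. lia.
    +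
      assert (step : forall r, a <= 2*r -> 2*r + 2 < a + 2*m -> GZ (2*r) = GZ (2*r+2)).
      { intros r H1 H2.
        pose proof (W (2*r+2) ltac:(lia)) as W1.
        pose proof (W (2*r+1) ltac:(lia)) as W2.
        pose proof (P2 (r+t+1)) as Q1. pose proof (P2 r) as Q2.
        replace (2*(r+t+1)+1) with (2*r+2+m) in Q1 by lia.
        replace (2*(r+t+1)) with (2*r+1+m) in Q1 by lia.
        pose proof (GZ_lt (2*r)). pose proof (GZ_lt (2*r+1)). pose proof (GZ_lt (2*r+2)).
        pose proof (GZ_lt (2*r+1+m)). pose proof (GZ_lt (2*r+2+m)). lia. }
      assert (Hk : exists k, a <= 2*k <= a+1).
      { destruct (even_or_odd a) as [k [Ha|Ha]]; [exists k | exists (k+1)]; lia. }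
      destruct Hk as [k Hk].
      pose proof (step k ltac:(lia) ltac:(lia)) as S1.
      pose proof (step (k+1) ltac:(lia) ltac:(lia)) as S2.
      replace (2*(k+1)) with (2*k+2) in S2 by lia.
      replace (2*k+2+2) with (2*(k+2)) in S2 by lia.
      replace (2*k+2) with (2*(k+1)) in S1, S2 by lia.
      rewrite !P1 in S1, S2.
      apply (no3 (-k-2)).
      replace (-k-2+1) with (-(k+1)) by lia.
      replace (-k-2+2) with (-k) by lia.
      replace (-k-2) with (-(k+2)) by lia.
      split; congruence.
Qed.

Theorem theorem5 :
  ~ (exists (a m : nat), (0 < m)%nat /\
       forall i : nat, (i < m)%nat ->
         g (a + i) = g (a + m + i) /\ g (a + i) = g (a + 2 * m + i)).
Proof.
  intros [a [m [Hm H]]].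
  apply (main m (Z.of_nat a) (Z.of_nat m) eq_refl ltac:(lia)).
  intros j Hj.
  set (jn := Z.to_nat j).
  replace j with (Z.of_nat jn) by lia.
  replace (Z.of_nat jn + Z.of_nat m) with (Z.of_nat (jn + m)) by lia.
  rewrite <- !g_GZ.
  destruct (Nat.lt_ge_cases jn (a + m)).
  - destruct (H (jn - a)%nat ltac:(lia)) as [H1 H2].
    replace (a + (jn - a))%nat with jn in H1 by lia.
    replace (a + m + (jn - a))%nat with (jn + m)%nat in H1 by lia. exact H1.
  - destruct (H (jn - a - m)%nat ltac:(lia)) as [H1 H2].
    replace (a + m + (jn - a - m))%nat with jn in H1 by lia.
    replace (a + 2 * m + (jn - a - m))%nat with (jn + m)%nat in H2 by lia. congruence.
Qed.
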